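(* Fix $x\in\mathbb X$ and $\Lambda\Subset\mathbb X\setminus\{x\}$, a total order $\preceq$ on $\mathbf F(x)$, and a set $\mathbf E\subset\mathbf F(x)$ with $\mathbf E\supset\{X\in\mathbf F(x)\mid W(X)\neq1,\ X\setminus\{x\}\subset\Lambda\}$. Suppose that $Z(\Lambda)\neq0$ and, unless $z(x)W(x)=0$, assume also $Z_X(\Lambda)\neq0$ for all $X\in\mathbf E$. Then \[ \widehat z(x,\Lambda)=z(x)W(x)\prod_{X\in\mathbf E}\frac{Z_X(\Lambda\mid x)}{Z_X(\Lambda)}. \] In particular, if $z(x)=1$, then $\widehat z(x,\Lambda)=\prod_{X\in\mathbf E}\widehat z_X(x,\Lambda)$.
   Context: $\mathbb X$ is a finite or countably infinite set, $X\Subset\mathbb X$ means finite subset, $\mathbf F$ is the set of finite subsets of $\mathbb X$. Fix $z:\mathbb X\to\mathbb C$, $W:\mathbf F\to\mathbb C$; $f^X=\prod_{y\in X}f(y)$, $W(x)=W(\{x\})$; singletons $\{x\}$ are written $x$ inside arguments. For an interaction $V:\mathbf F\to\mathbb C$, the conditional interaction is $V(X\mid B)=\prod_{C\subset B}V(X\cup C)$ if $X\cap B=\varnothing$, $V(X\mid B)=0$ if $X=\{y\}$ with $y\in B$, and $V(X\mid B)=1$ otherwise; the Boltzmann factor is $\kappa(X\mid B)=\prod_{\varnothing\neq S\subset X}V(S\mid B)$; partition functions are $Z(X,\Lambda\mid B)=\sum_{Y\subset\Lambda\setminus X}z^{X\cup Y}\kappa(X\cup Y\mid B)$, $Z(\Lambda\mid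 B)=Z(\varnothing,\Lambda\mid B)$, with $B$ omitted when $B=\varnothing$; correlations $R(X,\Lambda\mid B)=Z(X,\Lambda\mid B)/Z(\Lambda\mid B)$ when the denominator is nonzero, and effective activities $\widehat z(y,\Lambda\mid B)=R(\{y\},\Lambda\mid B)$ for $y\notin\Lambda$. Unadorned $\kappa,Z,R,\widehat z$ refer to $V=W$. Let $\mathbf F(x)=\{X\Subset\mathbb X\mid x\in X\}$ and $X'=X\setminus\{x\}$. Given the total order $\preceq$ on $\mathbf F(x)$ (with strict part $\prec$) and $X\in\mathbf F(x)$, define $W_X:\mathbf F\to\mathbb C$ by $W_X(Y)=W(Y)W(\{x\}\cup Y)$ if $x\notin Y$ and $\{x\}\cup Y\prec X$; $W_X(Y)=1$ if $x\in Y$ and $Y\neq X$; $W_X(Y)=W(Y)$ otherwise. Quantities built from $V=W_X$ are written $\kappa_X,Z_X,R_X,\widehat z_X$. Convention: a product is set equal to $0$ if at least one factor is well defined and equals $0$, even if other factors are ill-defined. *)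

(* Defs.v *)
From HB Require Import structures.
From mathcomp Require Import all_boot all_order all_algebra.
From mathcomp Require Import finmap.
Set Implicit Arguments. Unset Strict Implicit. Unset Printing Implicit Defensive.
Import Order.TTheory GRing.Theory.
Local Open Scope ring_scope.
Local Open Scope fset_scope.

Section Defs.
Variables (C : fieldType) (T : countType).

Definition fpow (f : T -> C) (X : {fset T}) : C := \prod_(y <- X) f y.

Definition cond_int (V : {fset T} -> C) (B X : {fset T}) : C :=
  if [disjoint X & B]%fset then \prod_(D <- fpowerset B) V (X `|` D)
  else if (#|` X| == 1)%N && (X `<=` B) then 0 else 1.

Definition kappa (V : {fset T} -> C) (B X : {fset T}) : C :=
  \prod_(S <- fpowerset X | S != fset0) cond_int V B S.

Definition Zpart (z : T -> C) (V : {fset T} -> C) (X Lam B : {fset T}) : C :=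
  \sum_(Y <- fpowerset (Lam `\` X)) fpow z (X `|` Y) * kappa V B (X `|` Y).

Definition Zfun (z : T -> C) (V : {fset T} -> C) (Lam B : {fset T}) : C :=
  Zpart z V fset0 Lam B.

Definition qopt (a b : C) : option C := if b == 0 then None else Some (a / b).

Definition Rcorr (z : T -> C) (V : {fset T} -> C) (X Lam B : {fset T}) : option C :=
  qopt (Zpart z V X Lam B) (Zfun z V Lam B).

Definition zhat (z : T -> C) (V : {fset T} -> C) (y : T) (Lam B : {fset T}) : option C :=
  Rcorr z V [fset y] Lam B.

Definition strict (ord : rel {fset T}) (A B : {fset T}) : bool := ord A B && (A != B).

Definition WX (ord : rel {fset T}) (W : {fset T} -> C) (x : T) (X Y : {fset T}) : C :=
  if (x \notin Y) && strict ord (x |` Y) X then W Y * W (x |` Y)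
  else if (x \in Y) && (Y != X) then 1
  else W Y.
End Defs.

Definition total_order_on {A : Type} (P : A -> Prop) (r : rel A) : Prop :=
  [/\ (forall a, P a -> r a a),
      (forall a b, P a -> P b -> r a b -> r b a -> a = b),
      (forall a b c, P a -> P b -> P c -> r a b -> r b c -> r a c)
    & (forall a b, P a -> P b -> r a b || r b a)].

(* Product over a possibly infinite index set E of possibly ill-defined factors F a
   (None = ill-defined), with the paper's convention: the product is 0 if some
   factor is well defined and equals 0 (even if other factors are ill-defined);
   otherwise all factors must be defined and all but finitely many equal to 1,
   and the product is the finite product of the remaining ones.
   [prod_conv E F v] means "the product equals v". *)
Definition prod_conv {C : fieldType} {A : eqType} (E : A -> Prop)
  (F : A -> option C) (v : C) : Prop :=
  ((exists a, E a /\ F a = Some 0) /\ v = 0) \/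
  ((forall a, E a -> F a <> None) /\
   exists s : seq A, [/\ uniq s, (forall a, a \in s -> E a),
                        (forall a, E a -> a \notin s -> F a = Some 1)
                      & v = \prod_(a <- s) odflt 0 (F a)]).

(* Main.v *)
Require Import Defs.
From HB Require Import structures.
From mathcomp Require Import all_boot all_order all_algebra.
From mathcomp Require Import finmap.
Import Order.TTheory GRing.Theory.
Local Open Scope ring_scope.
Local Open Scope fset_scope.

Section Aux.
Variables (C : fieldType) (T : countType).

Lemma pow_split (x : T) (Y : {fset T}) (h : {fset T} -> C) : x \notin Y ->
  \prod_(S <- fpowerset (x |` Y)) h S =
  \prod_(S <- fpowerset Y) h S * \prod_(S <- fpowerset Y) h (x |` S).
Proof.
move=> xY.
have xS i : i `<=` Y -> x \notin i by move=> /fsubsetP s; apply: contra xY => /s.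
rewrite (big_fsetID _ (fun S : {fset T} => x \in S)) [RHS]mulrC; congr (_ * _).
  rewrite (@eq_fbigl _ _ _ _ _ [fset x |` S | S in fpowerset Y]); last first.
    move=> U; rewrite !inE /= fpowersetE; apply/idP/imfsetP => [/andP[sub xU]|[S]].
      exists (U `\ x); first by rewrite /= fpowersetE fsubDset.
      by rewrite fsetD1K.
    rewrite /= fpowersetE => sub ->; apply/andP; split; last by rewrite fset1U1.
    by rewrite fsetUS.
  rewrite big_imfset //=.
  move=> S1 S2; rewrite /= !fpowersetE => s1 s2 e.
  by rewrite -(fsetU1K (xS _ s1)) e fsetU1K // xS.
apply: eq_fbigl => S; rewrite !inE /= !fpowersetE.
apply/andP/idP => [[sub xS']|sub]; last first.
  split; first exact: (fsubset_trans sub (fsubsetU1 _ _)).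
  exact: xS.
apply/fsubsetP => a aS; have := fsubsetP sub a aS; rewrite !inE.
by case/orP => // /eqP ax; move: xS'; rewrite -ax aS.
Qed.

Lemma cond_int0 (V : {fset T} -> C) S : cond_int V fset0 S = V S.
Proof. by rewrite /cond_int fdisjointX0 fpowerset0 big_seq_fset1 fsetU0. Qed.

Lemma cond_int1 (V : {fset T} -> C) x S : x \notin S ->
  cond_int V [fset x] S = V S * V (x |` S).
Proof.
move=> xS; rewrite /cond_int fdisjointX1 xS fpowerset1 big_fsetU1; last first.
  by rewrite inE; apply/eqP => /fsetP /(_ x); rewrite !inE eqxx.
by rewrite big_seq_fset1 fsetU0 fsetUC.
Qed.

Lemma kappa_x (V : {fset T} -> C) x Y : x \notin Y ->
  kappa V fset0 (x |` Y) = V [fset x] * kappa V [fset x] Y.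
Proof.
move=> xY.
have xS i : i `<=` Y -> x \notin i by move=> /fsubsetP s; apply: contra xY => /s.
rewrite /kappa.
rewrite (eq_bigr (fun S => V S)); last by move=> S _; rewrite cond_int0.
rewrite big_mkcond pow_split //.
rewrite [in RHS]big_seq_cond [in RHS](eq_bigr (fun S => V S * V (x |` S))); last first.
  by move=> S /andP[]; rewrite fpowersetE => /xS xs _; apply: cond_int1.
rewrite -[in RHS]big_seq_cond.
rewrite big_split /= -big_mkcond mulrCA; congr (_ * _).
rewrite (bigD1_seq fset0) ?fset_uniq //=; last by rewrite fpowersetE fsub0set.
have ne S : x |` S != fset0 by apply/eqP => /fsetP/(_ x); rewrite !inE eqxx.
have ne1 : [fset x] != fset0 by apply/eqP => /fsetP/(_ x); rewrite !inE eqxx.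
rewrite fsetU0 ne1; congr (_ * _).
by apply: eq_bigr => S _; rewrite ne.
Qed.

Lemma Zpart_x (z : T -> C) (V : {fset T} -> C) x Lam : x \notin Lam ->
  Zpart z V [fset x] Lam fset0 = z x * V [fset x] * Zfun z V Lam [fset x].
Proof.
move=> xL; rewrite /Zfun /Zpart mem_fsetD1 // fsetD0 big_distrr /=.
apply: eq_big_seq => Y; rewrite fpowersetE => sub.
have xY : x \notin Y by apply: contra xL => /(fsubsetP sub).
rewrite fset0U kappa_x // /fpow big_fsetU1 //.
by rewrite mulrACA.
Qed.
End Aux.

Section Tele.
Variables (C : fieldType) (T : countType) (x : T) (ord : rel {fset T}).
Variable g : ({fset T} -> bool) -> C.
Hypothesis tot : total_order_on (fun X : {fset T} => x \in X) ord.
Hypothesis g_ext : forall P Q, (forall U, P U = Q U) -> g P = g Q.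

Definition Pr (r : seq {fset T}) X := fun U => (U \in r) && ord U X.
Definition Sr (r : seq {fset T}) X := fun U => (U \in r) && strict ord U X.

Lemma max_ex (r : seq {fset T}) : r != [::] -> (forall X, X \in r -> x \in X) ->
  exists2 m, m \in r & forall U, U \in r -> ord U m.
Proof.
case: tot => refl anti trans totl.
elim: r => // a r IH _ Fr.
have Fa : x \in a by apply: Fr; rewrite inE eqxx.
case: r IH Fr => [|b r] IH Fr.
  by exists a; rewrite ?inE ?eqxx // => U; rewrite inE => /eqP ->; apply: refl.
have Fr' : forall X, X \in b :: r -> x \in X by move=> X XI; apply: Fr; rewrite inE XI orbT.
have [m mr mmax] := IH isT Fr'.
have Fm : x \in m by apply: Fr; rewrite inE mr orbT.
case/orP: (totl _ _ Fm Fa) => ma.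
  exists a; first by rewrite inE eqxx.
  move=> U; rewrite inE => /orP[/eqP ->|Ur]; first exact: refl.
  apply: (trans _ m) => //; [by apply: Fr; rewrite inE Ur orbT| by apply: mmax].
exists m; first by rewrite inE mr orbT.
by move=> U; rewrite inE => /orP[/eqP ->//|/mmax].
Qed.

Lemma step (r : seq {fset T}) m : uniq r -> (forall X, X \in r -> x \in X) -> m \in r ->
  (forall U, U \in r -> ord U m) ->
  [/\ forall X, X \in rem m r -> forall U, Pr r X U = Pr (rem m r) X U,
      forall X, X \in rem m r -> forall U, Sr r X U = Sr (rem m r) X U,
      forall U, Pr r m U = (U \in r) &
      forall U, Sr r m U = (U \in rem m r)].
Proof.
case: tot => refl anti trans totl.
move=> ur Fr mr mmax; have memr := mem_rem_uniq m ur.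
have key X : X \in rem m r -> ord m X = false.
  rewrite memr inE => /andP[Xm Xr]; apply/negP => omX.
  by move: Xm; rewrite (anti _ _ (Fr _ Xr) (Fr _ mr) (mmax _ Xr) omX) eqxx.
split.
- move=> X Xr U; rewrite /Pr memr inE; case: (eqVneq U m) => [->|] //=.
  by rewrite key // andbF.
- move=> X Xr U; rewrite /Sr /strict memr inE; case: (eqVneq U m) => [->|] //=.
  by rewrite key // andbF.
- by move=> U; rewrite /Pr; case Ur: (U \in r) => //=; apply: mmax.
- move=> U; rewrite /Sr /strict memr inE; case Ur: (U \in r); last by rewrite andbF.
  by rewrite mmax // andbT.
Qed.

Lemma tele n (r : seq {fset T}) : size r = n -> uniq r -> (forall X, X \in r -> x \in X) ->
  g (fun _ => false) != 0 -> (forall X, X \in r -> g (Sr r X) != 0) ->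
  \prod_(X <- r) (g (Pr r X) / g (Sr r X)) = g (fun U => U \in r) / g (fun _ => false).
Proof.
move=> + + + g0; elim: n r => [|n IH] r.
  move/size0nil => -> _ _ _; rewrite big_nil.
  by rewrite (g_ext (fun U => U \in [::]) (fun _ => false)) // divff.
move=> sr ur Fr nz.
have [|m mr mmax] := @max_ex r _ Fr; first by rewrite -size_eq0 sr.
have [hP hS hPm hSm] := step r m ur Fr mr mmax.
have ur' : uniq (rem m r) by apply: rem_uniq.
have sub' X : X \in rem m r -> X \in r by move/mem_rem.
rewrite (bigD1_seq m) //= -big_filter -rem_filter //.
rewrite (eq_big_seq (fun X => g (Pr (rem m r) X) / g (Sr (rem m r) X))); last first.
  by move=> X Xr; rewrite (g_ext _ _ (hP X Xr)) (g_ext _ _ (hS X Xr)).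
rewrite IH //; first last.
- move=> X Xr; rewrite -(g_ext _ _ (hS X Xr)); exact: nz (sub' X Xr).
- by move=> X /sub'; apply: Fr.
- by rewrite size_rem // sr.
rewrite (g_ext _ _ hPm) (g_ext _ _ hSm).
have : g (fun U => U \in rem m r) != 0 by rewrite -(g_ext _ _ hSm); apply: nz.
by move=> h; rewrite mulrA divfK.
Qed.

Lemma zero_find n (r : seq {fset T}) : size r = n -> uniq r -> (forall X, X \in r -> x \in X) ->
  g (fun _ => false) != 0 -> g (fun U => U \in r) = 0 ->
  exists2 X, X \in r & g (Pr r X) = 0 /\ g (Sr r X) != 0.
Proof.
move=> + + + g0; elim: n r => [|n IH] r.
  move/size0nil => -> _ _; rewrite (g_ext (fun U => U \in [::]) (fun _ => false)) //.
  by move=> e; rewrite e eqxx in g0.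
move=> sr ur Fr z0.
have [|m mr mmax] := @max_ex r _ Fr; first by rewrite -size_eq0 sr.
have [hP hS hPm hSm] := step r m ur Fr mr mmax.
have ur' : uniq (rem m r) by apply: rem_uniq.
have sub' X : X \in rem m r -> X \in r by move/mem_rem.
have [z'|nz] := eqVneq (g (fun U => U \in rem m r)) 0; last first.
  by exists m => //; rewrite (g_ext _ _ hPm) (g_ext _ _ hSm).
have [||X Xr [h1 h2]] := IH (rem m r) _ ur' _ z'.
- by rewrite size_rem // sr.
- by move=> X /sub'; apply: Fr.
exists X; first exact: sub'.
by rewrite (g_ext _ _ (hP X Xr)) (g_ext _ _ (hS X Xr)).
Qed.
End Tele.
Arguments Pr {T} ord r X U.
Arguments Sr {T} ord r X U.

Section Main.
Variables (C : fieldType) (T : countType) (z : T -> C) (W : {fset T} -> C).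
Variables (x : T) (Lam : {fset T}) (ord : rel {fset T}).
Hypothesis xL : x \notin Lam.
Hypothesis tot : total_order_on (fun X : {fset T} => x \in X) ord.

Definition G (P : {fset T} -> bool) : C :=
  \sum_(Y <- fpowerset Lam) fpow z Y *
    \prod_(S <- fpowerset Y | S != fset0) (W S * (if P (x |` S) then W (x |` S) else 1)).

Lemma xnotin {S : {fset T}} : S `<=` Lam -> x \notin S.
Proof. by move=> /fsubsetP s; apply: contra xL => /s. Qed.

Lemma Zfun_G V B P :
  (forall S, S `<=` Lam -> S != fset0 ->
     cond_int V B S = W S * (if P (x |` S) then W (x |` S) else 1)) ->
  Zfun z V Lam B = G P.
Proof.
move=> H; rewrite /Zfun /Zpart /G fsetD0; apply: eq_big_seq => Y.
rewrite fpowersetE => sub; rewrite fset0U /kappa; congr (_ * _).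
rewrite big_seq_cond [RHS]big_seq_cond; apply: eq_bigr => S /andP[].
rewrite fpowersetE => SY ne; apply: H => //; exact: fsubset_trans SY sub.
Qed.

Lemma Z0 : Zfun z W Lam fset0 = G (fun _ => false).
Proof. by apply: Zfun_G => S _ _; rewrite cond_int0 mulr1. Qed.

Lemma Z1 : Zfun z W Lam [fset x] = G (fun _ => true).
Proof. by apply: Zfun_G => S sub _; rewrite cond_int1 // xnotin. Qed.

Lemma ZX0 X : Zfun z (WX ord W x X) Lam fset0 = G (fun U => strict ord U X).
Proof.
apply: Zfun_G => S sub _; rewrite cond_int0 /WX (xnotin sub) /=.
by case: ifP => // _; rewrite (negbTE (xnotin sub)) mulr1.
Qed.

Lemma ZX1 X : x \in X -> Zfun z (WX ord W x X) Lam [fset x] = G (fun U => ord U X).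
Proof.
case: tot => refl _ _ _ xX.
apply: Zfun_G => S sub _; rewrite cond_int1 ?xnotin // /WX (negbTE (xnotin sub)) /=.
rewrite fset1U1 /=.
case: (eqVneq (x |` S) X) => [->|ne].
  by rewrite /strict eqxx andbF refl.
by rewrite /strict ne andbT /=; case: ifP => _; rewrite mulr1.
Qed.

Lemma WX_x X : WX ord W x X [fset x] = if X == [fset x] then W [fset x] else 1.
Proof.
rewrite /WX fset11 /= eq_sym.
by case: (eqVneq [fset x] X) => [->|]; rewrite ?eqxx.
Qed.

Definition s : seq {fset T} :=
  map (fun S => x |` S) (filter (fun S => W (x |` S) != 1) (fpowerset Lam)).

Lemma mem_s U : (U \in s) = [&& x \in U, U `\ x `<=` Lam & W U != 1].
Proof.
apply/mapP/idP => [[S]|/and3P[xU sub w]].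
  rewrite mem_filter fpowersetE => /andP[w sub] ->.
  by rewrite fset1U1 fsetU1K ?xnotin // sub w.
exists (U `\ x); last by rewrite fsetD1K.
by rewrite mem_filter fpowersetE fsetD1K // w sub.
Qed.

Lemma uniq_s : uniq s.
Proof.
rewrite map_inj_in_uniq ?filter_uniq ?fset_uniq //.
move=> S1 S2; rewrite !mem_filter !fpowersetE => /andP[_ s1] /andP[_ s2] e.
by rewrite -(fsetU1K (xnotin s1)) e fsetU1K // xnotin.
Qed.

Lemma G_ext_s P Q : (forall U, U \in s -> P U = Q U) -> G P = G Q.
Proof.
move=> H; rewrite /G; apply: eq_big_seq => Y; rewrite fpowersetE => sub.
congr (_ * _); rewrite big_seq_cond [RHS]big_seq_cond; apply: eq_bigr => S /andP[].
rewrite fpowersetE => SY ne.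
have SL : S `<=` Lam by exact: fsubset_trans SY sub.
case: (eqVneq (W (x |` S)) 1) => [->|w]; first by case: ifP; case: ifP.
by rewrite H // mem_s fset1U1 fsetU1K ?xnotin // SL w.
Qed.


Lemma main_sec (E : {fset T} -> Prop) :
  (forall X, E X -> x \in X) ->
  (forall X : {fset T}, x \in X -> W X != 1 -> X `\ x `<=` Lam -> E X) ->
  Zfun z W Lam fset0 != 0 ->
  (z x * W [fset x] != 0 -> forall X, E X -> Zfun z (WX ord W x X) Lam fset0 != 0) ->
  (exists v : C, zhat z W x Lam fset0 = Some v /\
     (z x * W [fset x] = 0 -> v = 0) /\
     (z x * W [fset x] != 0 ->
        exists p : C,
          prod_conv E (fun X => qopt (Zfun z (WX ord W x X) Lam [fset x])
                                     (Zfun z (WX ord W x X) Lam fset0)) p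
          /\ v = z x * W [fset x] * p))
  /\
  (z x = 1 ->
     exists v : C, zhat z W x Lam fset0 = Some v /\
       prod_conv E (fun X => zhat z (WX ord W x X) x Lam fset0) v).
Proof.
move=> EF Ein Znz hyp.
have [refl anti trans totl] := tot.
have G0nz : G (fun _ => false) != 0 by rewrite -Z0.
have Gext : forall P Q, (forall U, P U = Q U) -> G P = G Q.
  by move=> P Q h; apply: G_ext_s => U _; exact: h U.
have sF : forall X, X \in s -> x \in X by move=> X; rewrite mem_s => /and3P[].
have sE : forall X, X \in s -> E X.
  by move=> X; rewrite mem_s => /and3P[? ? ?]; apply: Ein.
have hz : zhat z W x Lam fset0 =
    Some (z x * W [fset x] * (G (fun _ => true) / G (fun _ => false))).
  by rewrite /zhat /Rcorr /qopt Zpart_x // Z0 Z1 (negbTE G0nz) mulrA.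
have Gtele : (forall X, X \in s -> G (fun U => strict ord U X) != 0) ->
    \prod_(X <- s) (G (fun U => ord U X) / G (fun U => strict ord U X)) =
    G (fun _ => true) / G (fun _ => false).
  move=> nz.
  rewrite (eq_big_seq (fun X => G (Pr ord s X) / G (Sr ord s X))); last first.
    by move=> X Xs; congr (_ / _); apply: G_ext_s => U Us; rewrite /Pr /Sr Us.
  have nz' : forall X, X \in s -> G (Sr ord s X) != 0.
    move=> X Xs; rewrite (G_ext_s _ (fun U => strict ord U X)); first exact: nz.
    by move=> U Us; rewrite /Sr Us.
  rewrite (@tele C T x ord G tot Gext _ s erefl uniq_s sF G0nz nz').
  by congr (_ / _); apply: G_ext_s.
have zhX : forall X, x \in X -> zhat z (WX ord W x X) x Lam fset0 =
    qopt (z x * WX ord W x X [fset x] * G (fun U => ord U X))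
         (G (fun U => strict ord U X)).
  by move=> X xX; rewrite /zhat /Rcorr Zpart_x // ZX1 // ZX0.
have ratio1 : forall X, X \notin s ->
    G (fun U => ord U X) = G (fun U => strict ord U X).
  move=> X Xs; apply: G_ext_s => U Us; rewrite /strict.
  have -> : U != X by apply: contraNneq Xs => <-.
  by rewrite andbT.
split.
  exists (z x * W [fset x] * (G (fun _ => true) / G (fun _ => false))).
  split => //; split; first by move=> ->; rewrite !mul0r.
  move=> nz; have hX := hyp nz.
  have nzX : forall X, E X -> G (fun U => strict ord U X) != 0.
    by move=> X EX; rewrite -ZX0; apply: hX.
  exists (G (fun _ => true) / G (fun _ => false)); split => //; right; split.
    by move=> X EX; rewrite /qopt ZX0 (negbTE (nzX X EX)).
  exists s; split.
  - exact: uniq_s.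
  - exact: sE.
  - move=> X EX Xs; rewrite /qopt ZX0 ZX1 ?EF // (negbTE (nzX X EX)).
    by rewrite ratio1 // divff // nzX.
  - rewrite -Gtele; last by move=> X /sE; apply: nzX.
    apply: eq_big_seq => X Xs /=.
    by rewrite /qopt ZX0 ZX1 ?sF // (negbTE (nzX X (sE X Xs))).
move=> zx1.
exists (z x * W [fset x] * (G (fun _ => true) / G (fun _ => false))); split => //.
case: (eqVneq (W [fset x]) 0) => [w0|wnz].
  left; split; last by rewrite w0 mulr0 mul0r.
  have xs : [fset x] \in s by rewrite mem_s fset11 fsetDv fsub0set w0 eq_sym oner_eq0.
  case: (eqVneq (G (fun U => strict ord U [fset x])) 0) => [a0|anz]; last first.
    exists [fset x]; split; first exact: sE.
    by rewrite zhX ?fset11 // /qopt (negbTE anz) WX_x eqxx w0 mulr0 !mul0r.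
  pose r := filter (fun U => strict ord U [fset x]) s.
  have rs : forall U, U \in r -> U \in s by move=> U; rewrite mem_filter => /andP[].
  have memr : forall U, U \in s -> (U \in r) = strict ord U [fset x].
    by move=> U Us; rewrite mem_filter Us andbT.
  have ur : uniq r by apply: filter_uniq; apply: uniq_s.
  have rF : forall X, X \in r -> x \in X by move=> X /rs /sF.
  have r0 : G (fun U => U \in r) = 0.
    by rewrite -a0; apply: G_ext_s => U Us; rewrite memr.
  have [X Xr [h1 h2]] := @zero_find C T x ord G tot Gext _ r erefl ur rF G0nz r0.
  have Xs : X \in s by apply: rs.
  have sX : strict ord X [fset x] by rewrite -memr.
  have keyP : forall U, U \in s -> (U \in r) && ord U X = ord U X.
    move=> U Us; rewrite memr //; case oUX: (ord U X); rewrite ?andbF // andbT.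
    move: sX; rewrite /strict => /andP[oX nX].
    rewrite (trans U X [fset x] (sF U Us) (sF X Xs) (fset11 x) oUX oX) /=.
    apply/eqP => eU; move: oUX; rewrite eU => oxX.
    by move: nX; rewrite (anti _ _ (sF X Xs) (fset11 x) oX oxX) eqxx.
  have keyS : forall U, U \in s -> (U \in r) && strict ord U X = strict ord U X.
    by move=> U Us; rewrite /strict andbA keyP.
  exists X; split; first exact: sE.
  rewrite zhX ?sF //.
  have e1 : G (fun U => ord U X) = 0.
    by rewrite -h1; apply: G_ext_s => U Us; rewrite /Pr keyP.
  have e2 : G (Sr ord r X) = G (fun U => strict ord U X).
    by apply: G_ext_s => U Us; rewrite /Sr keyS.
  rewrite -e2 /qopt (negbTE h2) e1 mulr0 mul0r //.
right.
have nz : z x * W [fset x] != 0 by rewrite zx1 mul1r.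
have nzX : forall X, E X -> G (fun U => strict ord U X) != 0.
  by move=> X EX; rewrite -ZX0; apply: hyp.
split.
  by move=> X EX; rewrite zhX ?EF // /qopt (negbTE (nzX X EX)).
exists s; split; [exact: uniq_s | exact: sE | |].
  move=> X EX Xs; rewrite zhX ?EF // /qopt (negbTE (nzX X EX)) zx1 mul1r.
  have -> : WX ord W x X [fset x] = 1.
    rewrite WX_x; case: eqP => // eX; move: Xs.
    by rewrite eX mem_s fset11 fsetDv fsub0set /= => /negPn/eqP.
  by rewrite mul1r ratio1 // divff // nzX.
rewrite zx1 mul1r.
rewrite (eq_big_seq (fun X => WX ord W x X [fset x] *
   (G (fun U => ord U X) / G (fun U => strict ord U X)))); last first.
  move=> X Xs /=; rewrite zhX ?sF // /qopt (negbTE (nzX X (sE X Xs))) zx1 mul1r.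
  by rewrite mulrA.
rewrite big_split /= Gtele; last by move=> X /sE; apply: nzX.
congr (_ * _).
case: (boolP ([fset x] \in s)) => xs.
  rewrite (bigD1_seq [fset x]) //= ?uniq_s // WX_x eqxx big1 ?mulr1 //.
  by move=> X nX; rewrite WX_x (negbTE nX).
rewrite big1_seq.
  by move: xs; rewrite mem_s fset11 fsetDv fsub0set /= => /negPn/eqP.
move=> X /= Xs; rewrite WX_x; case: eqP => // eX.
by move: xs; rewrite -eX Xs.
Qed.
End Main.

Theorem lemma4p1 (C : fieldType) (T : countType) (z : T -> C) (W : {fset T} -> C)
  (x : T) (Lam : {fset T}) (ord : rel {fset T}) (E : {fset T} -> Prop) :
  x \notin Lam ->
  total_order_on (fun X : {fset T} => x \in X) ord ->
  (forall X, E X -> x \in X) ->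
  (forall X : {fset T}, x \in X -> W X != 1 -> X `\ x `<=` Lam -> E X) ->
  Zfun z W Lam fset0 != 0 ->
  (z x * W [fset x] != 0 -> forall X, E X -> Zfun z (WX ord W x X) Lam fset0 != 0) ->
  (exists v : C, zhat z W x Lam fset0 = Some v /\
     (z x * W [fset x] = 0 -> v = 0) /\
     (z x * W [fset x] != 0 ->
        exists p : C,
          prod_conv E (fun X => qopt (Zfun z (WX ord W x X) Lam [fset x])
                                     (Zfun z (WX ord W x X) Lam fset0)) p
          /\ v = z x * W [fset x] * p))
  /\
  (z x = 1 ->
     exists v : C, zhat z W x Lam fset0 = Some v /\
       prod_conv E (fun X => zhat z (WX ord W x X) x Lam fset0) v).
Proof.
move=> xL tot; exact: (@main_sec C T z W x Lam ord xL tot E).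
Qed.
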